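(* For every $v\geq 9$ there exists a connected symmetric configuration $v_3$ which has a blocking set of cardinality $q$ for every integer $q$ with $\lceil v/3\rceil\leq q\leq\lfloor 2v/3\rfloor$.
   Context: A symmetric configuration $v_3$ consists of a set of $v$ points and a collection of $v$ blocks, each block being a 3-element subset of the points, such that every point lies in exactly 3 blocks and any two distinct points lie in at most one common block. It is connected if it is not the union of two configurations on disjoint nonempty point sets (equivalently, its point–block incidence graph is connected). A blocking set is a subset $Q$ of the points such that every block contains at least one point of $Q$ and at least one point not in $Q$. *)

(* Defs.v *)
From mathcomp Require Import all_boot.
Set Implicit Arguments. Unset Strict Implicit. Unset Printing Implicit Defensive.

Definition is_config_v3 (v : nat) (B : 'I_v -> {set 'I_v}) : Prop :=
  (forall j, #|B j| = 3) /\
  (forall x : 'I_v, #|[set j | x \in B j]| = 3) /\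
  (forall x y : 'I_v, x != y -> #|[set j | (x \in B j) && (y \in B j)]| <= 1).

(* point-block incidence graph, vertex set 'I_v + 'I_v (points inl, blocks inr) *)
Definition incid (v : nat) (B : 'I_v -> {set 'I_v}) : rel ('I_v + 'I_v) :=
  fun a b => match a, b with
             | inl x, inr j => x \in B j
             | inr j, inl x => x \in B j
             | _, _ => false
             end.

Definition config_connected (v : nat) (B : 'I_v -> {set 'I_v}) : Prop :=
  forall a b : 'I_v + 'I_v, connect (incid B) a b.

Definition blocking_set (v : nat) (B : 'I_v -> {set 'I_v}) (Q : {set 'I_v}) : Prop :=
  forall j, (B j :&: Q != set0) /\ (B j :\: Q != set0).

(* Main.v *)
Require Import Defs.
From mathcomp Require Import all_boot zify.
Set Implicit Arguments. Unset Strict Implicit. Unset Printing Implicit Defensive.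

Definition R0 a c t p := p = t \/ p = a+c+t \/ (t+1<c /\ p = a+t+1) \/ (t+1 = a /\ p = a)
                \/ (c <= t+1 /\ t+1<a /\ p = t+1).
Definition R1 a c t p := p + a = t \/ (t+2 < 2*a /\ p = c+t+2) \/ (2*a <= t+2 /\ p + a = c+t+2) \/
        (t+2 < a+c /\ p = t+2) \/ (2*a <= t+2 /\ p + a = t+2) \/
        (a+c <= t+2 /\ t+3 < 2*a /\ p = c+t+3) \/ (a+c <= t+2 /\ t+3 = 2*a /\ p = a+c).
Definition R2 a c t p := p + 2*a = t \/ (t+1 < 3*a /\ p + a = c+t+1) \/ (t+1 = 3*a /\ p = a+c) \/ p + a = t.
Definition RP a c t p := (t < a /\ R0 a c t p) \/ (a <= t /\ t < 2*a /\ R1 a c t p) \/ (2*a <= t /\ R2 a c t p).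

Definition Rb (a c t p : nat) : bool :=
 ((t < a) && [|| p == t, p == a+c+t, (t+1<c) && (p == a+t+1), (t+1 == a) && (p == a)
                | [&& c <= t+1, t+1<a & p == t+1]])
 || ([&& a <= t, t < 2*a & [|| p + a == t, (t+2 < 2*a) && (p == c+t+2), (2*a <= t+2) && (p + a == c+t+2),
        (t+2 < a+c) && (p == t+2), (2*a <= t+2) && (p + a == t+2),
        [&& a+c <= t+2, t+3 < 2*a & p == c+t+3] | [&& a+c <= t+2, t+3 == 2*a & p == a+c]]]
 || ((2*a <= t) && [|| p + 2*a == t, (t+1 < 3*a) && (p + a == c+t+1), (t+1 == 3*a) && (p == a+c) | p + a == t])).

Lemma orPP (b1 b2 : bool) (P1 P2 : Prop) : (b1 <-> P1) -> (b2 <-> P2) -> (b1 || b2 <-> P1 \/ P2).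
Proof. move=> h1 h2; split; [case/orP; tauto | case=> [/h1 ->| /h2 ->] //; by rewrite orbT]. Qed.
Lemma andPP (b1 b2 : bool) (P1 P2 : Prop) : (b1 <-> P1) -> (b2 <-> P2) -> (b1 && b2 <-> P1 /\ P2).
Proof. move=> h1 h2; split; [case/andP; tauto | case=> /h1 -> /h2 -> //]. Qed.
Lemma eqPP (m n : nat) : (m == n) <-> m = n.
Proof. by split => /eqP. Qed.

Lemma RbP a c t p : Rb a c t p <-> RP a c t p.
Proof.
rewrite /Rb /RP /R0 /R1 /R2.
repeat (apply: orPP || apply: andPP || apply: eqPP || apply: iff_refl).
Qed.

Ltac dand := repeat match goal with H : _ /\ _ |- _ => destruct H end.
Ltac cd := repeat match goal with H : _ \/ _ |- _ => clear H end.
Ltac prune := try (solve [cd; lia]).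
Ltac go := repeat (match goal with H : _ \/ _ |- _ => destruct H as [H|H]; dand; prune end).

Ltac pick := lazymatch goal with
 | |- _ \/ _ => first [left; pick | right; pick]
 | |- _ /\ _ => split; pick
 | |- _ => lia end.

Definition Hyps a c := [/\ 9 <= 2*a+c, 3 <= a, c <= a, a <= c + 2 & 2 <= c].

Lemma facts v : 9 <= v -> Hyps ((v+2) %/ 3) (v - 2 * ((v+2) %/ 3)) /\ v = 2 * ((v+2) %/ 3) + (v - 2 * ((v+2) %/ 3)).
Proof. move=> hv; split; [split|]; lia. Qed.

Lemma card3 v (P : pred nat) n1 n2 n3 : n1 < v -> n2 < v -> n3 < v -> n1 <> n2 -> n1 <> n3 -> n2 <> n3 ->
  (forall n, n < v -> P n = [|| n == n1, n == n2 | n == n3]) -> #|[set x : 'I_v | P x]| = 3.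
Proof.
move=> h1 h2 h3 d12 d13 d23 hP.
have -> : [set x : 'I_v | P x] = [set x in [:: Ordinal h1; Ordinal h2; Ordinal h3]].
  apply/setP => x; rewrite !inE hP //.
have -> : #|[set x in [:: Ordinal h1; Ordinal h2; Ordinal h3]]| = #|[:: Ordinal h1; Ordinal h2; Ordinal h3]|.
  by apply: eq_card => x; rewrite inE.
apply/card_uniqP => /=; rewrite !inE; apply/and3P; split => //; [apply/norP; split|];
  apply/negP => /eqP [] //.
Qed.
Lemma pairL a c t1 t2 p1 p2 : 9 <= 2*a+c -> 3 <= a -> c <= a -> a <= c + 2 -> 2 <= c -> t1 < 2*a + c -> t2 < 2*a+c ->
  p1 < 2*a+c -> p2 < 2*a+c -> p1 <> p2 -> RP a c t1 p1 -> RP a c t1 p2 -> RP a c t2 p1 -> RP a c t2 p2 -> t1 = t2.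
Proof. rewrite /RP /R0 /R1 /R2 => *. dand. go. Qed.

Lemma pairB v a c t1 t2 p1 p2 : Hyps a c -> v = 2*a+c -> t1 < v -> t2 < v -> p1 < v -> p2 < v -> p1 <> p2 ->
  Rb a c t1 p1 -> Rb a c t1 p2 -> Rb a c t2 p1 -> Rb a c t2 p2 -> t1 = t2.
Proof.
case=> *; subst v; apply: (@pairL a c t1 t2 p1 p2) => //; exact/RbP.
Qed.

Ltac fin := let n := fresh "n" in move=> n ?; apply/idP/idP;
  [ move/RbP; rewrite /RP /R0 /R1 /R2 => ?; dand; go; lia
  | case/or3P => /eqP ->; apply/RbP; rewrite /RP /R0 /R1 /R2; pick ].

Lemma card_blk v a c t : Hyps a c -> v = 2*a+c -> t < v -> #|[set x : 'I_v | Rb a c t x]| = 3.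
Proof.
case=> h0 h1 h2 h3 h4 hv ht.
have [ta|ta] := ltnP t a.
  have [t1|t1] := ltnP (t+1) c.
    apply: (@card3 _ (Rb a c t) t (a+c+t) (a+t+1)); try lia. fin.
  have [t2|t2] := eqVneq (t+1) a.
    apply: (@card3 _ (Rb a c t) t (a+c+t) a); try lia. fin.
  apply: (@card3 _ (Rb a c t) t (a+c+t) (t+1)); try lia. fin.
have [tb|tb] := ltnP t (2*a).
  have [t1|t1] := ltnP (t+2) (a+c).
    apply: (@card3 _ (Rb a c t) (t-a) (c+t+2) (t+2)); try lia. fin.
  have [t2|t2] := ltnP (t+3) (2*a).
    apply: (@card3 _ (Rb a c t) (t-a) (c+t+2) (c+t+3)); try lia. fin.
  have [t3|t3] := eqVneq (t+3) (2*a).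
    apply: (@card3 _ (Rb a c t) (t-a) (c+t+2) (a+c)); try lia. fin.
  apply: (@card3 _ (Rb a c t) (t-a) (c+t+2-a) (t+2-a)); try lia. fin.
have [t1|t1] := ltnP (t+1) (3*a).
  apply: (@card3 _ (Rb a c t) (t-2*a) (c+t+1-a) (t-a)); try lia. fin.
apply: (@card3 _ (Rb a c t) (t-2*a) (a+c) (t-a)); try lia. fin.
Qed.

Lemma card_deg v a c x : Hyps a c -> v = 2*a+c -> x < v -> #|[set t : 'I_v | Rb a c t x]| = 3.
Proof.
case=> h0 h1 h2 h3 h4 hv hx.
have [xa|xa] := ltnP x a.
  have [x1|x1] := ltnP x c.
    apply: (@card3 _ (fun t => Rb a c t x) x (a+x) (2*a+x)); try lia. fin.
  apply: (@card3 _ (fun t => Rb a c t x) x (x-1) (a+x)); try lia. fin.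
have [xb|xb] := ltnP x (a+c).
  have [x1|x1] := eqVneq x a.
    apply: (@card3 _ (fun t => Rb a c t x) (a-1) (2*a-2) (2*a)); try lia. fin.
  have [x2|x2] := eqVneq x (a+1).
    apply: (@card3 _ (fun t => Rb a c t x) 0 (2*a-1) (2*a+1)); try lia. fin.
  apply: (@card3 _ (fun t => Rb a c t x) (x-a-1) (x-2) (a+x)); try lia. fin.
have [x1|x1] := eqVneq x (a+c).
  have [c1|c1] := eqVneq c a.
    apply: (@card3 _ (fun t => Rb a c t x) 0 (2*a-2) (3*a-1)); try lia. fin.
  apply: (@card3 _ (fun t => Rb a c t x) 0 (2*a-2) (2*a-3)); try lia. fin.
have [x2|x2] := eqVneq x (a+c+1).
  apply: (@card3 _ (fun t => Rb a c t x) 1 (2*a-1) (2*a)); try lia. fin.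
have [x3|x3] := leqP x (a+c+c).
  apply: (@card3 _ (fun t => Rb a c t x) (x-a-c) (x-c-2) (a+x-c-1)); try lia. fin.
apply: (@card3 _ (fun t => Rb a c t x) (x-a-c) (x-c-2) (x-c-3)); try lia. fin.
Qed.

Ltac rb := simpl; apply/RbP; rewrite /RP /R0 /R1 /R2 /=; pick.

Theorem mainTheorem2 (v : nat) (hv : 9 <= v) :
  exists B : 'I_v -> {set 'I_v},
    is_config_v3 B /\ config_connected B /\
    forall q : nat, (v + 2) %/ 3 <= q -> q <= (2 * v) %/ 3 ->
      exists Q : {set 'I_v}, #|Q| = q /\ blocking_set B Q.
Proof.
have [a [c [hH hva hq]]] : exists a c, [/\ Hyps a c, v = 2*a+c &
    forall q, (v + 2) %/ 3 <= q -> q <= (2 * v) %/ 3 -> a <= q <= a + c].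
  exists ((v+2) %/ 3), (v - 2 * ((v+2) %/ 3)); split; first by case: (facts hv).
  - lia.
  - move=> q; lia.
have hH' := hH; case: hH' => h0 h1 h2 h3 h4.
pose B := fun t : 'I_v => [set p : 'I_v | Rb a c t p].
exists B; split; [split; [|split] | split].
- move=> j; exact: card_blk.
- move=> x; have -> : [set j | x \in B j] = [set t : 'I_v | Rb a c t x].
    by apply/setP => j; rewrite !inE.
  exact: card_deg.
- move=> x y nxy; apply/card_le1_eqP => j k; rewrite !inE => /andP[jx jy] /andP[kx ky].
  apply: val_inj; apply: (@pairB v a c k j x y) => //.
  by move=> e; move/eqP: nxy; apply; apply: val_inj.
- have hsym : symmetric (incid B) by move=> [x|x] [y|y].
  have edge : forall (x t : 'I_v), Rb a c t x -> connect (incid B) (inl x) (inr t).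
    by move=> x t hx; apply: connect1; rewrite /= inE.
  have step : forall (x y t : 'I_v), Rb a c t x -> Rb a c t y -> connect (incid B) (inl x) (inl y).
    move=> x y t hx hy; apply: connect_trans (edge _ _ hx) _.
    by rewrite (sym_connect_sym hsym); apply: edge.
  have v0 : 0 < v by lia.
  have CX : forall n (p : 'I_v), nat_of_ord p < a -> nat_of_ord p <= n -> connect (incid B) (inl (Ordinal v0)) (inl p).
    elim=> [|n IH] p hpa hpn.
      have -> : p = (Ordinal v0) by apply: val_inj; move: hpn; rewrite leqn0 => /eqP.
      by [].
    have [hp|hp] := leqP (nat_of_ord p) n; first exact: IH.
    have [e1|e1] := eqVneq (nat_of_ord p) 1.
      have o1 : 2*a < v by lia.
      have o2 : a+c+1 < v by lia.
      apply: connect_trans (step (Ordinal v0) (Ordinal o2) (Ordinal o1) _ _) _; try rb.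
      have o3 : 1 < v by lia.
      apply: (step _ _ (Ordinal o3)); rb.
    have [e0|e0] := eqVneq (nat_of_ord p) 0.
      have -> : p = (Ordinal v0) by apply: val_inj; exact: e0.
      exact: connect0.
    have o1 : nat_of_ord p - 2 < v by lia.
    apply: connect_trans (IH (Ordinal o1) _ _) _ => /=; try lia.
    have o2 : a + nat_of_ord p - 2 < v by lia.
    have o3 : a+c+ nat_of_ord p < v by lia.
    apply: connect_trans (step _ (Ordinal o3) (Ordinal o2) _ _) _; try rb.
    apply: (step _ _ p); rb.
  have CP : forall p : 'I_v, connect (incid B) (inl (Ordinal v0)) (inl p).
    move=> p; have hp' := ltn_ord p; have [pa|pa] := ltnP (nat_of_ord p) a; first exact: (CX (nat_of_ord p)).
    have [pb|pb] := ltnP (nat_of_ord p) (a+c).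
      have o1 : nat_of_ord p - a < v by lia.
      have o2 : a + nat_of_ord p < v by lia.
      apply: connect_trans (CX (nat_of_ord p - a) (Ordinal o1) _ _) _ => /=; try lia.
      apply: (step _ _ (Ordinal o2)); rb.
    have o1 : nat_of_ord p - a - c < v by lia.
    apply: connect_trans (CX (nat_of_ord p - a - c) (Ordinal o1) _ _) _ => /=; try lia.
    apply: (step _ _ (Ordinal o1)); rb.
  have CB : forall t : 'I_v, connect (incid B) (inl (Ordinal v0)) (inr t).
    move=> t; have ht' := ltn_ord t.
    have [x [hx hxt]] : exists x : 'I_v, val x < a /\ Rb a c t x.
      have [ta|ta] := ltnP (nat_of_ord t) a; first by exists t; split => //; rb.
      have [tb|tb] := ltnP (nat_of_ord t) (2*a).
        have o1 : nat_of_ord t - a < v by lia.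
        by exists (Ordinal o1); split => /=; [lia|rb].
      have o1 : nat_of_ord t - 2*a < v by lia.
      by exists (Ordinal o1); split => /=; [lia|rb].
    exact: connect_trans (CP x) (edge _ _ hxt).
  have CV : forall w, connect (incid B) (inl (Ordinal v0)) w by case.
  move=> u w; apply: connect_trans (CV w).
  by rewrite (sym_connect_sym hsym).
- move=> q hq1 hq2; have /andP[qa qb] := hq q hq1 hq2.
  have hqv : q <= v by lia.
  exists [set x : 'I_v | x < q]; split.
    have -> : [set x : 'I_v | x < q] = widen_ord hqv @: [set: 'I_q].
      apply/setP => x; rewrite inE; apply/idP/imsetP => [hx | [i _ ->] /=]; last exact: ltn_ord.
      by exists (Ordinal hx) => //; apply: val_inj.
    by rewrite card_imset ?cardsT ?card_ord //; by move=> i j /(congr1 val) /= /val_inj.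
  move=> t; have ht' := ltn_ord t; split; apply/set0Pn.
    have [ta|ta] := ltnP (nat_of_ord t) a.
      by exists t; rewrite !inE; apply/andP; split; [rb|lia].
    have [tb|tb] := ltnP (nat_of_ord t) (2*a).
      have o1 : nat_of_ord t - a < v by lia.
      by exists (Ordinal o1); rewrite !inE; apply/andP; split; [rb|rewrite /=; lia].
    have o1 : nat_of_ord t - 2*a < v by lia.
    by exists (Ordinal o1); rewrite !inE; apply/andP; split; [rb|rewrite /=; lia].
  have [ta|ta] := ltnP (nat_of_ord t) a.
    have o1 : a + c + nat_of_ord t < v by lia.
    by exists (Ordinal o1); rewrite !inE; apply/andP; split; [rewrite /=; lia|rb].
  have [tb|tb] := ltnP (nat_of_ord t) (2*a).
    have [t2|t2] := ltnP (nat_of_ord t + 2) (2*a).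
      have o1 : c + nat_of_ord t + 2 < v by lia.
      by exists (Ordinal o1); rewrite !inE; apply/andP; split; [rewrite /=; lia|rb].
    have o1 : c + nat_of_ord t + 2 - a < v by lia.
    by exists (Ordinal o1); rewrite !inE; apply/andP; split; [rewrite /=; lia|rb].
  have [t2|t2] := ltnP (nat_of_ord t + 1) (3*a).
    have o1 : c + nat_of_ord t + 1 - a < v by lia.
    by exists (Ordinal o1); rewrite !inE; apply/andP; split; [rewrite /=; lia|rb].
  have o1 : a + c < v by lia.
  by exists (Ordinal o1); rewrite !inE; apply/andP; split; [rewrite /=; lia|rb].
Qed.
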